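(* Let $\mathbb{K}$ be a field with $\operatorname{char}(\mathbb{K})\neq 2$, let $d\geq 2$ and $\mathcal{R}=M_d(\mathbb{K})$, the ring of $d\times d$ matrices over $\mathbb{K}$, and let $f(\chi_1,\ldots,\chi_n)$ be a multilinear polynomial over $\mathbb{K}$ which is not central-valued on $\mathcal{R}$. Let $a_1,\ldots,a_6\in\mathcal{R}$ be such that $$a_1f(\zeta)^2+a_2f(\zeta)a_3f(\zeta)+f(\zeta)a_5f(\zeta)a_6+f(\zeta)a_4f(\zeta)-a_5f(\zeta)^2a_6=0$$ for all $\zeta=(\zeta_1,\ldots,\zeta_n)\in\mathcal{R}^n$. Then one of the following holds: (1) $a_2,a_5\in\mathbb{K}\cdot I_d$; (2) $a_2,a_6\in\mathbb{K}\cdot I_d$; (3) $a_3,a_5\in\mathbb{K}\cdot I_d$; (4) $a_3,a_6\in\mathbb{K}\cdot I_d$.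
   Context: A multilinear polynomial over $\mathbb{K}$ is a noncommutative polynomial in which each variable appears exactly once in every monomial; it is non-central if not all its values on $\mathcal{R}$ are scalar matrices. $I_d$ is the identity matrix. (The paper writes $a_i\in\mathcal{U}$, the Utumi quotient ring, which for $M_d(\mathbb{K})$ coincides with $M_d(\mathbb{K})$.) *)

(* Defs.v *)
From HB Require Import structures.
From mathcomp Require Import all_boot all_order all_fingroup all_algebra.
Set Implicit Arguments. Unset Strict Implicit. Unset Printing Implicit Defensive.
Import GRing.Theory.
Local Open Scope ring_scope.

(* A multilinear noncommutative polynomial in the variables x_0,...,x_{n-1}
   over K: every monomial contains each variable exactly once, hence is
   x_{s 0} x_{s 1} ... x_{s (n-1)} for a permutation s of 'I_n. *)
Definition multilin_poly (K : fieldType) (n : nat) := {ffun 'S_n -> K}.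

Definition mlp_eval (K : fieldType) (n m : nat) (f : multilin_poly K n)
    (z : 'I_n -> 'M[K]_m.+1) : 'M[K]_m.+1 :=
  \sum_(s : 'S_n) f s *: \prod_(i < n) z (s i).

Definition central_valued (K : fieldType) (n m : nat) (f : multilin_poly K n) :=
  forall z : 'I_n -> 'M[K]_m.+1, is_scalar_mx (mlp_eval f z).

(* Main.v *)
Require Import Defs.
From HB Require Import structures.
From mathcomp Require Import all_boot all_order all_fingroup all_algebra.
From Stdlib Require Import Classical.
Import GRing.Theory.
Local Open Scope ring_scope.

Lemma zmod5 (V : zmodType) (a1 b1 a2 b2 a3 b3 a4 b4 a5 b5 : V) :
  (a1+b1)+(a2+b2)+(a3+b3)+(a4+b4)-(a5+b5) = (a1+a2+a3+a4-a5)+(b1+b2+b3+b4-b5).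
Proof. by rewrite opprD (addrACA a1) (addrACA (a1 + a2)) (addrACA (a1+a2+a3)) (addrACA (a1+a2+a3+a4)). Qed.

Definition Phi {S : comNzRingType} {n : nat} (a1 a2 a3 a4 a5 a6 X Y : 'M[S]_n.+1) :=
  a1 * X * Y + a2 * X * a3 * Y + X * a5 * Y * a6 + X * a4 * Y - a5 * X * Y * a6.

Lemma PhiDl {S : comNzRingType} {n : nat} (a1 a2 a3 a4 a5 a6 X1 X2 Y : 'M[S]_n.+1) :
  Phi a1 a2 a3 a4 a5 a6 (X1 + X2) Y = Phi a1 a2 a3 a4 a5 a6 X1 Y + Phi a1 a2 a3 a4 a5 a6 X2 Y.
Proof. by rewrite /Phi !(mulrDl, mulrDr) zmod5. Qed.

Lemma PhiDr {S : comNzRingType} {n : nat} (a1 a2 a3 a4 a5 a6 X Y1 Y2 : 'M[S]_n.+1) :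
  Phi a1 a2 a3 a4 a5 a6 X (Y1 + Y2) = Phi a1 a2 a3 a4 a5 a6 X Y1 + Phi a1 a2 a3 a4 a5 a6 X Y2.
Proof. by rewrite /Phi !(mulrDl, mulrDr) zmod5. Qed.

Lemma PhiZl {S : comNzRingType} {n : nat} (a1 a2 a3 a4 a5 a6 X Y : 'M[S]_n.+1) c :
  Phi a1 a2 a3 a4 a5 a6 (c *: X) Y = c *: Phi a1 a2 a3 a4 a5 a6 X Y.
Proof. by rewrite /Phi -!scalerAr -!scalerAl scalerBr !scalerDr. Qed.

Lemma PhiZr {S : comNzRingType} {n : nat} (a1 a2 a3 a4 a5 a6 X Y : 'M[S]_n.+1) c :
  Phi a1 a2 a3 a4 a5 a6 X (c *: Y) = c *: Phi a1 a2 a3 a4 a5 a6 X Y.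
Proof. by rewrite /Phi -!scalerAr -!scalerAl scalerBr !scalerDr. Qed.

Definition ev {S : comNzRingType} {N n : nat} (c : 'S_N -> S) (z : 'I_N -> 'M[S]_n.+1)
  : 'M[S]_n.+1 := \sum_(s : 'S_N) c s *: \prod_(i < N) z (s i).

Lemma ev_ext {S : comNzRingType} {N n : nat} (c : 'S_N -> S) (z z' : 'I_N -> 'M[S]_n.+1) :
  (forall i, z i = z' i) -> ev c z = ev c z'.
Proof. by move=> e; apply: eq_bigr => s _; congr (_ *: _); apply: eq_bigr => i _. Qed.

Lemma prod_upd0 {S : comNzRingType} {n : nat} {I : eqType} (r : seq I) (j : I)
  (H : I -> 'M[S]_n.+1) x :
  count_mem j r = 0%N ->
  \prod_(i <- r) (if i == j then x else H i) = \prod_(i <- r) H i.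
Proof.
elim: r => [|a r IH] /=; first by rewrite !big_nil.
rewrite !big_cons; have [->|ne] := eqVneq a j; first by rewrite add1n.
by rewrite add0n => h; rewrite IH.
Qed.

Lemma prod_upd {S : comNzRingType} {n : nat} {I : eqType} (r : seq I) (j : I)
  (H : I -> 'M[S]_n.+1) c x y :
  count_mem j r = 1%N ->
  \prod_(i <- r) (if i == j then c *: x + y else H i) =
  c *: \prod_(i <- r) (if i == j then x else H i) + \prod_(i <- r) (if i == j then y else H i).
Proof.
elim: r => [|a r IH] /=; first by [].
rewrite !big_cons; have [_|ne] := eqVneq a j.
  rewrite add1n => -[h0].
  by rewrite !prod_upd0 // mulrDl scalerAl.
by rewrite add0n => h; rewrite IH // mulrDr scalerAr.
Qed.

Definition upd {N : nat} {T : Type} (z : 'I_N -> T) (k : 'I_N) (w : T) :=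
  fun i => if i == k then w else z i.

Lemma ev_upd {S : comNzRingType} {N n : nat} (c : 'S_N -> S) (z : 'I_N -> 'M[S]_n.+1) k a x y :
  ev c (upd z k (a *: x + y)) = a *: ev c (upd z k x) + ev c (upd z k y).
Proof.
rewrite /ev scaler_sumr -big_split /=; apply: eq_bigr => s _.
have E : forall w, \prod_(i < N) upd z k w (s i) =
   \prod_(i <- index_enum 'I_N) (if i == s^-1%g k then w else z (s i)).
  move=> w; apply: eq_bigr => i _; rewrite /upd.
  by rewrite -{1}(permKV s k) (inj_eq perm_inj).
rewrite !E prod_upd; last by rewrite count_uniq_mem ?index_enum_uniq // mem_index_enum.
by rewrite scalerDr !scalerA mulrC.
Qed.


Lemma basis_zero {S : comNzRingType} {n : nat} (L : 'M[S]_n.+1 -> 'M[S]_n.+1) :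
  (forall a x y, L (a *: x + y) = a *: L x + L y) ->
  (forall i j, L (delta_mx i j) = 0) -> forall w, L w = 0.
Proof.
move=> Llin Ld w.
have L0 : L 0 = 0.
  by have := Llin (-1) 0 0; rewrite scaler0 addr0 scaleN1r addNr.
have LD : {morph L : x y / x + y}.
  by move=> x y /=; have := Llin 1 x y; rewrite !scale1r.
rewrite (matrix_sum_delta w) (big_morph L LD L0) big1 // => i _.
rewrite (big_morph L LD L0) big1 // => j _.
by rewrite -[_ *: _]addr0 Llin Ld L0 scaler0 addr0.
Qed.

Definition Pq {S : comNzRingType} {n : nat} (a1 a2 a3 a4 a5 a6 F : 'M[S]_n.+1) :=
  Phi a1 a2 a3 a4 a5 a6 F F.

Lemma quad_ext (K : fieldType) (S : idomainType) (phi : {rmorphism K -> S}) (n : nat)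
  (a1 a2 a3 a4 a5 a6 : 'M[S]_n.+1) (G : 'M[S]_n.+1 -> 'M[S]_n.+1) :
  (2 : S) != 0 ->
  (forall a x y, G (a *: x + y) = a *: G x + G y) ->
  (forall v : 'M[K]_n.+1, Pq a1 a2 a3 a4 a5 a6 (G (map_mx phi v)) = 0) ->
  forall w, Pq a1 a2 a3 a4 a5 a6 (G w) = 0.
Proof.
move=> two Glin Gv w.
pose Psi u v := Phi a1 a2 a3 a4 a5 a6 (G u) (G v) + Phi a1 a2 a3 a4 a5 a6 (G v) (G u).
have GD : forall x y, G (x + y) = G x + G y by move=> x y; have := Glin 1 x y; rewrite !scale1r.
have G0 : G 0 = 0 by have := Glin (-1) 0 0; rewrite scaler0 addr0 scaleN1r addNr.
have GZ : forall a x, G (a *: x) = a *: G x.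
  by move=> a x; have := Glin a x 0; rewrite !addr0 G0 addr0.
have PsiL : forall v a x y, Psi (a *: x + y) v = a *: Psi x v + Psi y v.
  move=> v a x y; rewrite /Psi Glin PhiDl PhiDr PhiZl PhiZr.
  by rewrite addrACA -scalerDr.
have PsiR : forall u a x y, Psi u (a *: x + y) = a *: Psi u x + Psi u y.
  move=> u a x y; rewrite /Psi Glin PhiDl PhiDr PhiZl PhiZr.
  by rewrite addrACA -scalerDr.
have S1 : forall v1 v2, Psi (map_mx phi v1) (map_mx phi v2) = 0.
  move=> v1 v2; have := Gv (v1 + v2); rewrite raddfD GD /Pq !PhiDl !PhiDr.
  have := Gv v1; have := Gv v2; rewrite /Pq => -> -> .
  by rewrite add0r addr0 /Psi addrC.
have S2 : forall x v2, Psi x (map_mx phi v2) = 0.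
  move=> x v2; apply: (basis_zero (fun x => Psi x (map_mx phi v2))) => // i j.
  by rewrite -(map_delta_mx phi) S1.
have S3 : forall x y, Psi x y = 0.
  move=> x y; apply: (basis_zero (Psi x)) => // i j.
  by rewrite -(map_delta_mx phi) S2.
have := S3 w w; rewrite /Psi -mulr2n -scaler_nat => /eqP.
by rewrite scalemx_eq0 (negPf two) /= => /eqP.
Qed.

Lemma Pq_map (K S : comNzRingType) (phi : {rmorphism K -> S}) (n : nat)
  (a1 a2 a3 a4 a5 a6 F : 'M[K]_n.+1) :
  map_mx phi (Pq a1 a2 a3 a4 a5 a6 F) =
  Pq (map_mx phi a1) (map_mx phi a2) (map_mx phi a3) (map_mx phi a4) (map_mx phi a5)
     (map_mx phi a6) (map_mx phi F).
Proof. by rewrite /Pq /Phi rmorphB !rmorphD !rmorphM. Qed.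

Lemma ev_map (K S : comNzRingType) (phi : {rmorphism K -> S}) (N n : nat)
  (c : 'S_N -> K) (z : 'I_N -> 'M[K]_n.+1) :
  map_mx phi (ev c z) = ev (fun s => phi (c s)) (fun i => map_mx phi (z i)).
Proof.
rewrite /ev rmorph_sum; apply: eq_bigr => s _.
by change (map_mx phi (c s *: \prod_(i < N) z (s i)) = phi (c s) *: \prod_(i < N) map_mx phi (z (s i))); rewrite map_mxZ rmorph_prod.
Qed.

Lemma ext_id (K : fieldType) (S : idomainType) (phi : {rmorphism K -> S}) (N n : nat)
  (c : 'S_N -> K) (a1 a2 a3 a4 a5 a6 : 'M[K]_n.+1) :
  (2 : S) != 0 ->
  (forall z, Pq a1 a2 a3 a4 a5 a6 (ev c z) = 0) ->
  forall z : 'I_N -> 'M[S]_n.+1,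
  Pq (map_mx phi a1) (map_mx phi a2) (map_mx phi a3) (map_mx phi a4) (map_mx phi a5)
     (map_mx phi a6) (ev (fun s => phi (c s)) z) = 0.
Proof.
move=> two hyp.
set A := Pq (map_mx phi a1) _ _ _ _ _.
suff Q : forall k (y : 'I_N -> 'M[K]_n.+1) (x : 'I_N -> 'M[S]_n.+1),
    A (ev (fun s => phi (c s)) (fun i => if (i < k)%N then x i else map_mx phi (y i))) = 0.
  move=> z; have := Q N (fun _ => 0) z.
  by rewrite (ev_ext _ (fun i => if (i < N)%N then z i else _) z) // => i; rewrite ltn_ord.
elim=> [|k IH] y x.
  rewrite (ev_ext _ _ (fun i => map_mx phi (y i))) //.
  by rewrite -ev_map /A -Pq_map hyp raddf0.
case: (ltnP k N) => hk; last first.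
  rewrite (ev_ext _ _ (fun i => if (i < k)%N then x i else map_mx phi (y i))); first exact: IH.
  by move=> i; rewrite (leq_trans (ltn_ord i) hk) ltnS (leq_trans (ltnW (ltn_ord i)) hk).
pose kk := Ordinal hk.
pose z0 := fun i : 'I_N => if (i < k)%N then x i else map_mx phi (y i).
have -> : ev (fun s => phi (c s)) (fun i => if (i < k.+1)%N then x i else map_mx phi (y i))
    = ev (fun s => phi (c s)) (upd z0 kk (x kk)).
  apply: ev_ext => i; rewrite /upd /z0 ltnS leq_eqVlt.
  have [->|ne] := eqVneq i kk; first by rewrite /= eqxx.
  have ne' : (i : nat) != k by apply: contra ne => /eqP e; apply/eqP/val_inj.
  by rewrite (negPf ne').
apply: (@quad_ext K S phi n _ _ _ _ _ _ (fun w => ev (fun s => phi (c s)) (upd z0 kk w))) => //.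
  by move=> a u v; rewrite ev_upd.
move=> v; have := IH (fun i => if i == kk then v else y i) x.
rewrite (ev_ext _ _ (upd z0 kk (map_mx phi v))) // => i.
rewrite /upd /z0; have [->|ne] := eqVneq i kk; first by rewrite /= ltnn.
by [].
Qed.



Lemma PqZ {S : comNzRingType} {n : nat} (a1 a2 a3 a4 a5 a6 F : 'M[S]_n.+1) k :
  Pq a1 a2 a3 a4 a5 a6 (k *: F) = (k * k) *: Pq a1 a2 a3 a4 a5 a6 F.
Proof. by rewrite /Pq PhiZl PhiZr scalerA. Qed.

Lemma prod_conj {S : comNzRingType} {n : nat} {I : Type} (A B : 'M[S]_n.+1) (c : S)
  (Z : I -> 'M[S]_n.+1) (r : seq I) :
  B * A = c%:M -> r <> [::] ->
  \prod_(i <- r) (A * Z i * B) = c ^+ (size r).-1 *: (A * \prod_(i <- r) Z i * B).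
Proof.
move=> BA; elim: r => [|a r IH] // _.
case: r IH => [|b r] IH.
  by rewrite !big_cons !big_nil !mulr1 expr0 scale1r.
rewrite big_cons IH // [in RHS]big_cons /=.
have ms : forall M : 'M[S]_n.+1, M * c%:M = c *: M by move=> M; exact: mul_mx_scalar.
rewrite -scalerAr !mulrA -[A * Z a * B * A]mulrA BA ms.
by rewrite -!scalerAl scalerA exprS mulrC.
Qed.

Lemma utrick {S : idomainType} {N n : nat} (c : 'S_N -> S)
  (a1 a2 a3 a4 a5 a6 : 'M[S]_n.+1) :
  (forall z, Pq a1 a2 a3 a4 a5 a6 (ev c z) = 0) -> (0 < N)%N ->
  forall (A B : 'M[S]_n.+1) (k : S) z, B * A = k%:M -> k != 0 ->
  Pq a1 a2 a3 a4 a5 a6 (A * ev c z * B) = 0.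
Proof.
move=> hyp Npos A B k z BA k0.
have ne : index_enum 'I_N <> [::].
  by move=> e; have := mem_index_enum (Ordinal Npos); rewrite e.
have := hyp (fun i => A * z i * B).
have -> : ev c (fun i => A * z i * B) =
          k ^+ (size (index_enum 'I_N)).-1 *: (A * ev c z * B).
  rewrite /ev mulr_sumr mulr_suml scaler_sumr; apply: eq_bigr => s _.
  rewrite (@prod_conj _ _ _ A B k (fun i => z (s i)) _ BA ne) scalerA mulrC -scalerA.
  by rewrite -scalerAr -scalerAl.
move/eqP; rewrite PqZ scalemx_eq0 mulf_eq0 orbb expf_eq0 (negPf k0) andbF /=.
by move/eqP.
Qed.


Lemma map_mxM' (R S : comNzRingType) (f : {rmorphism R -> S}) (n : nat) (A B : 'M[R]_n.+1) :
  map_mx f (A * B) = map_mx f A * map_mx f B.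
Proof. exact: map_mxM. Qed.

Lemma conj_step (K : fieldType) (N n : nat) (c : 'S_N -> K) (a1 a2 a3 a4 a5 a6 : 'M[K]_n.+1) :
  (2 : K) != 0 -> (forall z, Pq a1 a2 a3 a4 a5 a6 (ev c z) = 0) -> (0 < N)%N ->
  forall (z0 : 'I_N -> 'M[K]_n.+1) (E : 'M[{poly K}]_n.+1), E * E = 0 ->
  Pq (map_mx polyC a1) (map_mx polyC a2) (map_mx polyC a3) (map_mx polyC a4)
     (map_mx polyC a5) (map_mx polyC a6) (E * map_mx polyC (ev c z0) * E) = 0.
Proof.
move=> two hyp Npos z0 E EE.
pose phiS : {rmorphism K -> {poly {poly K}}} := (polyC \o polyC)%FUN.
have two' : (2 : {poly {poly K}}) != 0 by rewrite -(rmorph_nat phiS) fmorph_eq0.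
have hS := @ext_id K _ phiS N n c a1 a2 a3 a4 a5 a6 two' hyp.
pose u : {poly {poly K}} := 'X.
pose ES := map_mx (@polyC {poly K}) E.
have ESS : ES * ES = 0 by rewrite -rmorphM EE raddf0.
have BA : (u%:M + ES) * (u%:M - ES) = (u * u)%:M.
  have sc : ES * u%:M = u%:M * ES by exact: scalar_mxC.
  by rewrite mulrDl !mulrBr ESS subr0 sc subrK; exact: (esym (scalar_mxM _ _ _)).
have u0 : u * u != 0 by rewrite mulf_neq0 // polyX_eq0.
have := @utrick _ N n _ _ _ _ _ _ _ hS Npos _ _ _ (fun i => map_mx phiS (z0 i)) BA u0.
pose psi := horner_eval (0 : {poly K}).
move/(congr1 (map_mx psi)); rewrite Pq_map raddf0.
have mK : forall M : 'M[K]_n.+1, map_mx psi (map_mx phiS M) = map_mx polyC M.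
  by move=> M; apply/matrixP => i j; rewrite !mxE /= /psi horner_evalE hornerC.
have mR : map_mx psi ES = E.
  by apply/matrixP => i j; rewrite !mxE /= /psi horner_evalE hornerC.
have mu : map_mx psi (u%:M : 'M_n.+1) = 0.
  by apply/matrixP => i j; rewrite !mxE /psi horner_evalE hornerMn hornerX mul0rn.
rewrite !mK !map_mxM' map_mxB map_mxD !mu !mR -ev_map mK sub0r add0r.
by rewrite mulNr mulNr -scaleN1r PqZ mulrNN mulr1 scale1r.
Qed.


Lemma dA (S : comNzRingType) (n : nat) (i j : 'I_n.+1) (A : 'M[S]_n.+1) p q :
  (delta_mx i j * A) p q = ((p == i)%:R * A j q).
Proof.
rewrite !mxE (bigD1 j) //= big1 ?addr0 => [|r /negPf rj]; rewrite !mxE.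
  by rewrite eqxx andbT.
by rewrite rj andbF mul0r.
Qed.

Lemma dAd (S : comNzRingType) (n : nat) (i j k l : 'I_n.+1) (A : 'M[S]_n.+1) :
  delta_mx i j * A * delta_mx k l = A j k *: delta_mx i l.
Proof.
apply/matrixP => p q; rewrite [LHS]mxE (bigD1 k) //= big1 ?addr0 => [|r /negPf rk].
  rewrite dA !mxE eqxx /=.
  by case: (p == i); case: (q == l); rewrite /= ?mul1r ?mul0r ?mulr1 ?mulr0.
by rewrite !mxE rk mulr0.
Qed.


Lemma uv_calc (S : comNzRingType) (n : nat) (i j : 'I_n.+1) (u v : 'M[S]_n.+1)
  (phi : 'M[S]_n.+1 -> S) :
  i != j ->
  (forall a, v * a * u = phi a *: delta_mx j i) ->
  delta_mx j j * v = v -> u * delta_mx i i = u -> v * u = 0 ->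
  let F := u * delta_mx i j * v in
  (forall a, F * a * F = phi a *: F) /\ F * F = 0 /\
  (forall a1 a2 a3 a4 a5 a6, v * Pq a1 a2 a3 a4 a5 a6 F = (phi a2 * phi a3) *: v /\
                             Pq a1 a2 a3 a4 a5 a6 F * u = (phi a5 * phi a6) *: u).
Proof.
move=> ij vau vj ui vu F.
have dd : forall p q r, delta_mx p q * delta_mx q r = delta_mx p r :> 'M[S]_n.+1.
  by move=> *; exact: mul_delta_mx.
have dd0 : forall p q q' r, q != q' -> delta_mx p q * delta_mx q' r = 0 :> 'M[S]_n.+1.
  by move=> p q q' r h; exact: mul_delta_mx_0.
have FaF : forall a, F * a * F = phi a *: F.
  move=> a; rewrite /F.
  have -> : u * delta_mx i j * v * a * (u * delta_mx i j * v) =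
            u * delta_mx i j * (v * a * u) * delta_mx i j * v by rewrite !mulrA.
  rewrite vau -scalerAr -!scalerAl; congr (_ *: _).
  by rewrite -(mulrA u (delta_mx i j) (delta_mx j i)) dd -(mulrA u (delta_mx i i)) dd.
have FF : F * F = 0.
  by rewrite /F !mulrA -(mulrA _ v u) vu mulr0 !mul0r.
have vF : v * F = 0 by rewrite /F !mulrA vu !mul0r.
have Fu : F * u = 0 by rewrite /F -!mulrA vu !mulr0.
split=> //; split=> // a1 a2 a3 a4 a5 a6.
have PqF : Pq a1 a2 a3 a4 a5 a6 F =
    phi a3 *: (a2 * F) + phi a5 *: (F * a6) + phi a4 *: F.
  rewrite /Pq /Phi -(mulrA a1) FF mulr0 add0r -(mulrA a5) FF mulr0 mul0r subr0.
  by rewrite -(mulrA (a2 * F) a3 F) -(mulrA a2 F) (mulrA F a3 F) !FaF -scalerAr -scalerAl.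
rewrite PqF; split.
  rewrite !mulrDr -!scalerAr vF scaler0 addr0 (mulrA v F a6) vF mul0r scaler0 addr0.
  rewrite (mulrA v a2 F) /F !mulrA vau -!scalerAl dd vj scalerA mulrC.
  done.
rewrite !mulrDl -!scalerAl Fu scaler0 addr0 -(mulrA a2 F u) Fu mulr0 scaler0 add0r.
rewrite /F -(mulrA (u * delta_mx i j * v) a6 u) -(mulrA (u * delta_mx i j) v (a6 * u)).
rewrite (mulrA v a6 u) vau -scalerAr -(mulrA u (delta_mx i j) (delta_mx j i)) dd ui.
by rewrite scalerA mulrC.
Qed.


Lemma core (K : fieldType) (N n : nat) (c : 'S_N -> K) (a1 a2 a3 a4 a5 a6 : 'M[K]_n.+1) :
  (2 : K) != 0 -> (forall z, Pq a1 a2 a3 a4 a5 a6 (ev c z) = 0) -> (0 < N)%N ->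
  forall (z0 : 'I_N -> 'M[K]_n.+1) (i j : 'I_n.+1), i != j ->
  forall H : 'M[{poly K}]_n.+1,
  let phi Y := (H * map_mx polyC Y * \adj H) j i in
  phi (ev c z0) * phi (ev c z0) * (phi a2 * phi a3) * phi (ev c z0) = 0 /\
  phi (ev c z0) * phi (ev c z0) * (phi a5 * phi a6) * phi (ev c z0) = 0.
Proof.
move=> two hyp Npos z0 i j ij H phi.
pose u := \adj H * delta_mx i i.
pose v := delta_mx j j * H.
pose ph (a : 'M[{poly K}]_n.+1) := (H * a * \adj H) j i.
have dd : forall p q r, delta_mx p q * delta_mx q r = delta_mx p r :> 'M[{poly K}]_n.+1.
  by move=> *; exact: mul_delta_mx.
have vau : forall a, v * a * u = ph a *: delta_mx j i.
  move=> a; have -> : v * a * u = delta_mx j j * (H * a * \adj H) * delta_mx i i.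
    by rewrite /u /v !mulrA.
  by rewrite dAd.
have vj : delta_mx j j * v = v by rewrite /v mulrA dd.
have ui : u * delta_mx i i = u by rewrite /u -mulrA dd.
have vu : v * u = 0.
  have -> : v * u = v * 1 * u by rewrite mulr1.
  rewrite vau /ph mulr1.
  have -> : H * \adj H = (\det H)%:M by exact: mul_mx_adj.
  by rewrite mxE eq_sym (negPf ij) mulr0n scale0r.
have [FaF [FF hP]] := @uv_calc _ n i j u v ph ij vau vj ui vu.
set F := u * delta_mx i j * v in FaF FF hP.
set X := ev c z0.
have hc := @conj_step K N n c a1 a2 a3 a4 a5 a6 two hyp Npos z0 F FF.
rewrite -/X FaF PqZ in hc.
have phE : forall Y, phi Y = ph (map_mx polyC Y) by [].
have [h1 h2] := hP (map_mx polyC a1) (map_mx polyC a2) (map_mx polyC a3)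
    (map_mx polyC a4) (map_mx polyC a5) (map_mx polyC a6).
have ent : forall k : {poly K}, (k *: delta_mx j i : 'M[{poly K}]_n.+1) j i = k.
  by move=> k; rewrite !mxE !eqxx mulr1.
have e1 : v * ((ph (map_mx polyC X) * ph (map_mx polyC X)) *:
     Pq (map_mx polyC a1) (map_mx polyC a2) (map_mx polyC a3)
        (map_mx polyC a4) (map_mx polyC a5) (map_mx polyC a6) F) * map_mx polyC X * u = 0.
  by rewrite hc mulr0 !mul0r.
have e2 : v * map_mx polyC X * ((ph (map_mx polyC X) * ph (map_mx polyC X)) *:
     Pq (map_mx polyC a1) (map_mx polyC a2) (map_mx polyC a3)
        (map_mx polyC a4) (map_mx polyC a5) (map_mx polyC a6) F) * u = 0.
  by rewrite hc mulr0 mul0r.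
rewrite -scalerAr -!scalerAl h1 -!scalerAl vau !scalerA in e1.
rewrite -scalerAr -scalerAl -(mulrA (v * map_mx polyC X)) h2 -scalerAr vau !scalerA in e2.
split.
  by have := congr1 (fun M : 'M[{poly K}]_n.+1 => M j i) e1; rewrite /= ent mxE.
by have := congr1 (fun M : 'M[{poly K}]_n.+1 => M j i) e2; rewrite /= ent mxE.
Qed.


Definition cwit {K : fieldType} {n : nat} (i j : 'I_n.+1) (Y : 'M[K]_n.+1) :=
  exists h h' : 'M[K]_n.+1, h' * h = 1 /\ (h * Y * h') j i != 0.

Lemma W0 (K : fieldType) (n : nat) (i j : 'I_n.+1) (Y : 'M[K]_n.+1) :
  cwit i j Y -> exists h : 'M[K]_n.+1, (h * Y * \adj h) j i != 0.
Proof.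
move=> [h [h' [hh hY]]]; exists h.
have hh2 : h * h' = 1 by apply: mulmx1C.
have adjE : \adj h = \det h *: h'.
  have -> : \adj h = h' * h * \adj h by rewrite hh mul1r.
  rewrite -mulrA.
  have -> : h * \adj h = (\det h)%:M by exact: mul_mx_adj.
  by rewrite -mul_mx_scalar.
have dh : \det h != 0.
  apply/eqP => e; have := congr1 determinant hh2.
  rewrite -mulmxE det_mulmx e mul0r.
  have -> : (1 : 'M[K]_n.+1) = 1%:M by [].
  by rewrite det1 => /eqP; rewrite eq_sym oner_eq0.
by rewrite adjE -scalerAr mxE mulf_neq0.
Qed.

Lemma W1 (K : fieldType) (n : nat) (i j : 'I_n.+1) (Y : 'M[K]_n.+1) p q :
  i != j -> p != q -> Y p q != 0 -> cwit i j Y.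
Proof.
move=> ij pq Ypq.
pose s1 := tperm j p.
pose s := (s1 * tperm (s1 i) q)%g.
have s1i : s1 i != p.
  rewrite /s1; case: tpermP => [e|e|e1 e2].
  - by move: ij; rewrite e eqxx.
  - by rewrite -e eq_sym.
  - by apply/eqP.
have sj : s j = p.
  by rewrite permM /s1 tpermL tpermD // eq_sym.
have si : s i = q by rewrite permM tpermL.
exists (perm_mx s), (perm_mx s^-1); split.
  by rewrite -mulmxE -perm_mxM mulVg perm_mx1.
have -> : perm_mx s * Y * perm_mx s^-1 = col_perm s (row_perm s Y).
  by rewrite col_permE row_permE.
by rewrite !mxE sj si.
Qed.

Lemma W2 (K : fieldType) (n : nat) (i j : 'I_n.+1) (Y g g' : 'M[K]_n.+1) :
  g' * g = 1 -> cwit i j (g * Y * g') -> cwit i j Y.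
Proof.
move=> gg [h [h' [hh hY]]]; exists (h * g), (g' * h'); split.
  by rewrite mulrA -(mulrA g') hh mulr1 gg.
by rewrite !mulrA in hY *.
Qed.

Lemma Ad (S : comNzRingType) (n : nat) (k l : 'I_n.+1) (A : 'M[S]_n.+1) p q :
  (A * delta_mx k l) p q = A p k * (q == l)%:R.
Proof.
rewrite !mxE (bigD1 k) //= big1 ?addr0 => [|r /negPf rk]; rewrite !mxE.
  by rewrite eqxx.
by rewrite rk mulr0.
Qed.

Lemma mxDE (S : comNzRingType) (n : nat) (A B : 'M[S]_n.+1) p q : (A + B) p q = A p q + B p q.
Proof. by rewrite mxE. Qed.
Lemma mxNE (S : comNzRingType) (n : nat) (A : 'M[S]_n.+1) p q : (- A) p q = - A p q.
Proof. by rewrite mxE. Qed.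
Lemma mxZE (S : comNzRingType) (n : nat) (A : 'M[S]_n.+1) c p q : (c *: A) p q = c * A p q.
Proof. by rewrite mxE. Qed.

Lemma W3 (K : fieldType) (n : nat) (i p : 'I_n.+1) (Y : 'M[K]_n.+1) :
  i != p ->
  let g := 1 + delta_mx i p in let g' := 1 - delta_mx i p in
  g' * g = 1 /\ (g * Y * g') i p = Y i p + Y p p - Y i i - Y p i.
Proof.
move=> ip g g'; split.
  rewrite /g /g' mulrDr !mulrBl mul1r mulr1 -mulmxE mul_delta_mx_0; last by rewrite eq_sym.
  by rewrite mul1mx subr0 subrK.
rewrite /g /g' mulrDl mul1r mulrBr mulr1 mulrDl dAd.
rewrite !(mxDE, mxNE, mxZE) dA Ad !mxE !eqxx /= !mulr1 !mul1r.
by rewrite opprD addrA.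
Qed.

Lemma witness (K : fieldType) (n : nat) (i j : 'I_n.+1) (Y : 'M[K]_n.+1) :
  i != j -> ~~ is_scalar_mx Y -> exists h : 'M[K]_n.+1, (h * Y * \adj h) j i != 0.
Proof.
move=> ij nsc; apply: (@W0 K n i j Y).
have [[p [q [pq Ypq]]]|off] := classic (exists p q, p != q /\ Y p q != 0).
  exact: (@W1 K n i j Y p q ij pq Ypq).
have off' : forall p q, p != q -> Y p q = 0.
  move=> p q pq; apply/eqP; apply/negPn/negP => h; apply: off; by exists p, q.
have [[p Yp]|diag] := classic (exists p, Y p p != Y i i).
  have ip : i != p by apply: contraNneq Yp => ->.
  have [gg e] := @W3 K n i p Y ip.
  apply: (@W2 K n i j Y _ _ gg); apply: (@W1 K n i j _ i p ij ip).
  rewrite e (off' i p ip) (off' p i); last by rewrite eq_sym.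
  by rewrite add0r subr0 subr_eq0.
exfalso; move/negP: nsc; apply; apply/is_scalar_mxP; exists (Y i i).
apply/matrixP => p q; rewrite mxE.
have [<-|pq] := eqVneq p q.
  by rewrite mulr1n; apply/eqP/negPn/negP => h; apply: diag; exists p.
by rewrite (off' p q pq).
Qed.


Lemma eval_phi (K : fieldType) (n : nat) (i j : 'I_n.+1) (H : 'M[{poly K}]_n.+1) (Y : 'M[K]_n.+1) k :
  ((H * map_mx polyC Y * \adj H) j i).[k] =
  (map_mx (horner_eval k) H * Y * \adj (map_mx (horner_eval k) H)) j i.
Proof.
have -> : ((H * map_mx polyC Y * \adj H) j i).[k] =
          (map_mx (horner_eval k) (H * map_mx polyC Y * \adj H)) j i.
  by rewrite [RHS]mxE.
rewrite !map_mxM' map_mx_adj.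
have -> : map_mx (horner_eval k) (map_mx polyC Y) = Y.
  by apply/matrixP => p q; rewrite !mxE horner_evalE hornerC.
by [].
Qed.

Lemma lagrange (K : fieldType) (n : nat) (i j : 'I_n.+1) (two : (2:K) != 0)
  (h0 h1 h2 Y0 Y1 Y2 : 'M[K]_n.+1) :
  (h0 * Y0 * \adj h0) j i != 0 -> (h1 * Y1 * \adj h1) j i != 0 ->
  (h2 * Y2 * \adj h2) j i != 0 ->
  exists H : 'M[{poly K}]_n.+1,
    [/\ (H * map_mx polyC Y0 * \adj H) j i != 0,
        (H * map_mx polyC Y1 * \adj H) j i != 0 &
        (H * map_mx polyC Y2 * \adj H) j i != 0].
Proof.
move=> n0 n1 n2.
pose L0 : {poly K} := 1 - 'X^2.
pose L1 : {poly K} := ('X^2 + 'X) * (2^-1)%:P.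
pose L2 : {poly K} := ('X^2 - 'X) * (2^-1)%:P.
pose H := L0 *: map_mx polyC h0 + L1 *: map_mx polyC h1 + L2 *: map_mx polyC h2.
have HE : forall k, map_mx (horner_eval k) H =
    L0.[k] *: h0 + L1.[k] *: h1 + L2.[k] *: h2.
  move=> k; apply/matrixP => p q; by rewrite !mxE !horner_evalE !hornerE.
have two' : 2 * 2^-1 = 1 :> K by rewrite mulfV.
have H0 : map_mx (horner_eval 0) H = h0.
  rewrite HE /L0 /L1 /L2 !hornerE !expr2.
  by rewrite !(mul0r, mulr0, subr0, sub0r, oppr0, scale0r, addr0, add0r, scale1r).
have H1 : map_mx (horner_eval 1) H = h1.
  rewrite HE /L0 /L1 /L2 !hornerE !expr2 !mulr1 subrr two'.
  by rewrite !(mul0r, mulr0, subr0, sub0r, oppr0, scale0r, addr0, add0r, scale1r).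
have H2 : map_mx (horner_eval (-1)) H = h2.
  rewrite HE /L0 /L1 /L2 !hornerE !expr2 mulrNN !mulr1 subrr opprK.
  have t2 : (1 + 1 : K) / 2 = 1 by exact: two'.
  rewrite t2.
  by rewrite !(mul0r, mulr0, subr0, sub0r, oppr0, scale0r, addr0, add0r, scale1r).
exists H; split; apply/eqP => e.
- by move: n0; rewrite -H0 -eval_phi e horner0 eqxx.
- by move: n1; rewrite -H1 -eval_phi e horner0 eqxx.
- by move: n2; rewrite -H2 -eval_phi e horner0 eqxx.
Qed.


Lemma ev0 (K : fieldType) (n : nat) (c : 'S_0 -> K) (z : 'I_0 -> 'M[K]_n.+1) :
  is_scalar_mx (ev c z).
Proof.
apply/is_scalar_mxP; exists (\sum_s c s).
rewrite /ev; under eq_bigr do rewrite big_ord0.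
by rewrite -scaler_suml scalemx1.
Qed.

Lemma pair_nonscalar (K : fieldType) (N d : nat) (c : 'S_N -> K)
  (a1 a2 a3 a4 a5 a6 : 'M[K]_d.+2) :
  (2 : K) != 0 -> (forall z, Pq a1 a2 a3 a4 a5 a6 (ev c z) = 0) -> (0 < N)%N ->
  forall z0 : 'I_N -> 'M[K]_d.+2, ~~ is_scalar_mx (ev c z0) ->
  (is_scalar_mx a2 || is_scalar_mx a3) && (is_scalar_mx a5 || is_scalar_mx a6).
Proof.
move=> two hyp Npos z0 nX.
pose i : 'I_d.+2 := ord0.
pose j : 'I_d.+2 := ord_max.
have ij : i != j by [].
have [hX hXn] := @witness K d.+1 i j _ ij nX.
have gen : forall Y1 Y2, ~~ is_scalar_mx Y1 -> ~~ is_scalar_mx Y2 ->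
   exists H : 'M[{poly K}]_d.+2,
    [/\ (H * map_mx polyC (ev c z0) * \adj H) j i != 0,
        (H * map_mx polyC Y1 * \adj H) j i != 0 &
        (H * map_mx polyC Y2 * \adj H) j i != 0].
  move=> Y1 Y2 n1 n2.
  have [h1 h1n] := @witness K d.+1 i j _ ij n1.
  have [h2 h2n] := @witness K d.+1 i j _ ij n2.
  exact: (@lagrange K d.+1 i j two _ _ _ _ _ _ hXn h1n h2n).
apply/andP; split.
  case: (boolP (is_scalar_mx a2)) => // n2; case: (boolP (is_scalar_mx a3)) => // n3.
  have [H [e0 e1 e2]] := gen _ _ n2 n3.
  have [c1 _] := @core K N d.+1 c a1 a2 a3 a4 a5 a6 two hyp Npos z0 i j ij H.
  by move: c1 => /eqP; rewrite !mulf_eq0 (negPf e0) (negPf e1) (negPf e2).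
case: (boolP (is_scalar_mx a5)) => // n5; case: (boolP (is_scalar_mx a6)) => // n6.
have [H [e0 e1 e2]] := gen _ _ n5 n6.
have [_ c1] := @core K N d.+1 c a1 a2 a3 a4 a5 a6 two hyp Npos z0 i j ij H.
by move: c1 => /eqP; rewrite !mulf_eq0 (negPf e0) (negPf e1) (negPf e2).
Qed.

Theorem lemma2 (K : fieldType) (d n : nat) (f : multilin_poly K n)
  (a1 a2 a3 a4 a5 a6 : 'M[K]_d.+2) :
  2 \notin [pchar K] ->
  ~ central_valued d.+1 f ->
  (forall z : 'I_n -> 'M[K]_d.+2,
     let F := mlp_eval f z in
     a1 * F ^+ 2 + a2 * F * a3 * F + F * a5 * F * a6 + F * a4 * F
       - a5 * F ^+ 2 * a6 = 0) ->
  [\/ is_scalar_mx a2 /\ is_scalar_mx a5,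
      is_scalar_mx a2 /\ is_scalar_mx a6,
      is_scalar_mx a3 /\ is_scalar_mx a5 |
      is_scalar_mx a3 /\ is_scalar_mx a6].
Proof.
move=> ch nc hyp.
have two : (2 : K) != 0.
  apply/negP => /eqP h2; apply/negP: ch; rewrite inE /= negbK; apply/eqP; exact: h2.
have hyp' : forall z, Pq a1 a2 a3 a4 a5 a6 (ev (fun s => f s) z) = 0.
  move=> z; have := hyp z; rewrite /= /Pq /Phi !expr2 !mulrA.
  by [].
have [z0 /negP nz0] := not_all_ex_not _ _ (nc : ~ (forall z, is_scalar_mx (mlp_eval f z))).
have Npos : (0 < n)%N.
  move: f hyp' z0 nz0 {hyp nc}; case: n => // f hyp' z0 nz0.
  exfalso; move/negP: nz0; apply; exact: (@ev0 K d.+1 (fun s => f s) z0).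
have := @pair_nonscalar K n d (fun s => f s) a1 a2 a3 a4 a5 a6 two hyp' Npos z0 nz0.
case/andP => /orP[s2|s3] /orP[s5|s6].
- exact: Or41.
- exact: Or42.
- exact: Or43.
- exact: Or44.
Qed.
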